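(* Let $L\ge1$, $D\ge1$, a dataset $\{(\mathbf{x}_n,y_n)\}_{n=1}^N\subset\mathbb{R}^D\times\{-1,1\}$, a differentiable loss $\ell(\hat y,y)$, and consider the gradient descent iterates $\mathbf{u}^{(t+1)}=\mathbf{u}^{(t)}-\eta_t\nabla_{\mathbf{u}}\mathcal{L}_{\mathcal{P}_{conv}}(\mathbf{u}^{(t)})$, where $\mathbf{u}=[\mathbf{u}_l]_{l=1}^L$, $\mathbf{u}_l\in\mathbb{R}^D$, and $\mathcal{L}_{\mathcal{P}_{conv}}(\mathbf{u})=\sum_n\ell(\langle\mathbf{x}_n,\mathcal{P}_{conv}(\mathbf{u})\rangle,y_n)$. Let $\hat{\mathbf{u}}^{(t)}=[\hat{\mathbf{u}}^{(t)}_l]_{l=1}^L$ be the Fourier transforms of the $\mathbf{u}^{(t)}_l$. Then for every $l$ and $t$, the update $\Delta\mathbf{u}_l^{(t)}=\mathbf{u}_l^{(t+1)}-\mathbf{u}_l^{(t)}$ satisfies $$\mathcal{F}\Delta\mathbf{u}^{(t)}_l=\hat{\mathbf{u}}^{(t+1)}_l-\hat{\mathbf{u}}^{(t)}_l=-\eta_t\nabla_{\hat{\mathbf{u}}_l}\hat{\mathcal{L}}_{\mathcal{P}_{diag}}(\hat{\mathbf{u}}^{(t)}),$$ where $\hat{\mathcal{L}}_{\mathcal{P}_{diag}}(\hat{\mathbf{u}})=\sum_n\ell(\langle\hat{\mathbf{x}}_n,\mathcal{P}_{diag}(\hat{\mathbf{u}})\rangle,y_n)$ and $\mathcal{P}_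{diag}(\hat{\mathbf{u}})=\hat{\mathbf{u}}_1\odot\cdots\odot\hat{\mathbf{u}}_L$.
   Context: Indices run over $0,\dots,D-1$. $(\mathbf{h}\star\mathbf{u})[d]=\frac{1}{\sqrt D}\sum_{k}\mathbf{u}[k]\mathbf{h}[(d+k)\bmod D]$; $\mathcal{P}_{conv}(\mathbf{u})$ is the vector with $\langle\mathbf{x},\mathcal{P}_{conv}(\mathbf{u})\rangle=((((\mathbf{x}\star\mathbf{u}_1)\star\mathbf{u}_2)\cdots)\star\mathbf{u}_{L-1})^\top\mathbf{u}_L$. $\mathcal{F}\in\mathbb{C}^{D\times D}$ is the DFT matrix $\mathcal{F}[d,p]=\frac{1}{\sqrt D}e^{-2\pi\mathrm{i}dp/D}$ and $\hat{\mathbf{z}}=\mathcal{F}\mathbf{z}$. $\odot$ is the entrywise product. The complex inner product is $\langle\hat{\mathbf{x}},\hat{\mathbf{w}}\rangle=\hat{\mathbf{x}}^\top\hat{\mathbf{w}}^*$ ($^*$ = complex conjugate), so each summand can be written $\ell\big(\hat{\mathbf{u}}_l^{*\top}\mathbf{a}_{n,l},y_n\big)$ with $\mathbf{a}_{n,l}=(\odot_{l'\neq l}\hat{\mathbf{u}}^*_{l'})\odot\hat{\mathbf{x}}_n$; the gradient convention is $\nabla_{\hat{\mathbf{u}}_l}\ell(\hat{\mathbf{u}}_l^{*\top}\mathbf{a},y)=\ell'(\hat{\mathbf{u}}_l^{*\top}\mathbf{a},y)\,\mathbf{a}$, with $\ell'=\partial\ell/\partial\hat y$. *)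

(* Defs.v *)
From HB Require Import structures.
From mathcomp Require Import all_boot all_order all_algebra.
From mathcomp Require Import all_classical all_reals all_analysis.
From mathcomp Require Export complex.
Set Implicit Arguments. Unset Strict Implicit. Unset Printing Implicit Defensive.
Import Order.TTheory GRing.Theory Num.Theory.
Local Open Scope ring_scope.
Local Open Scope complex_scope.

Section Defs.
Context {R : realType}.

Definition addI {D : nat} (i j : 'I_D) : 'I_D :=
  Ordinal (ltn_pmod (i + j) (leq_ltn_trans (leq0n i) (ltn_ord i))).

Definition corr {D : nat} (h u : 'I_D -> R) : 'I_D -> R :=
  fun d => (Num.sqrt (D%:R : R))^-1 * \sum_(k < D) u k * h (addI d k).

(* row n of the parameter matrix (u_{n+1} in the paper's 1-based indexing);
   0 outside the range *)
Definition urow {L D : nat} (U : 'M[R]_(L, D)) (n : nat) : 'I_D -> R :=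
  fun d => match insub n with Some l => U l d | None => 0 end.

Fixpoint corrs {L D : nat} (x : 'I_D -> R) (U : 'M[R]_(L, D)) (n : nat)
  : 'I_D -> R :=
  match n with
  | 0 => x
  | n'.+1 => corr (corrs x U n') (urow U n')
  end.

(* <x, P_conv(u)> = ((((x * u_1) * u_2) ...) * u_{L-1})^T u_L *)
Definition pconv_ip {L D : nat} (x : 'I_D -> R) (U : 'M[R]_(L, D)) : R :=
  \sum_(d < D) corrs x U L.-1 d * urow U L.-1 d.

Definition loss_conv {L D N : nat} (ell : R -> R -> R)
  (x : 'I_N -> 'I_D -> R) (y : 'I_N -> R) (U : 'M[R]_(L, D)) : R :=
  \sum_(n < N) ell (pconv_ip (x n) U) (y n).

Definition gradR {L D : nat} (f : 'M[R]_(L, D) -> R) (U : 'M[R]_(L, D))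
  : 'M[R]_(L, D) :=
  \matrix_(l < L, k < D) derive1 (fun s : R => f (U + s *: delta_mx l k)) 0.

Definition Fmat (D : nat) (d p : 'I_D) : R[i] :=
  let th : R := 2 * pi * (d * p)%N%:R / D%:R in
  (cos th -i* sin th) / (Num.sqrt (D%:R : R))%:C.

Definition dft {D : nat} (z : 'I_D -> R) : 'I_D -> R[i] :=
  fun d => \sum_(p < D) Fmat d p * (z p)%:C.

Definition Pdiag {L D : nat} (uh : 'I_L -> 'I_D -> R[i]) : 'I_D -> R[i] :=
  fun d => \prod_(l < L) uh l d.

Definition cip {D : nat} (a b : 'I_D -> R[i]) : R[i] :=
  \sum_(d < D) a d * (b d)^*.

Definition dloss (ell : R -> R -> R) (z c : R) : R :=
  derive1 (fun s => ell s c) z.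

Definition avec {L D : nat} (xh : 'I_D -> R[i]) (uh : 'I_L -> 'I_D -> R[i])
  (l : 'I_L) : 'I_D -> R[i] :=
  fun p => (\prod_(l' < L | l' != l) (uh l' p)^*) * xh p.

(* gradient of L^_{P_diag}(u^) = sum_n l(u^_l^{*T} a_{n,l}, y_n) w.r.t. u^_l,
   by the paper's convention  grad = sum_n l'(u^_l^{*T} a_{n,l}, y_n) a_{n,l}.
   l is defined on reals; its argument u^_l^{*T} a_{n,l} = <x^_n, P_diag(u^)>
   (real in the setting of the lemma) is fed to l' through its real part. *)
Definition grad_diag {L D N : nat} (ell : R -> R -> R)
  (xh : 'I_N -> 'I_D -> R[i]) (y : 'I_N -> R) (uh : 'I_L -> 'I_D -> R[i])
  (l : 'I_L) : 'I_D -> R[i] :=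
  fun p => \sum_(n < N)
    (dloss ell (complex.Re (\sum_(q < D) (uh l q)^* * avec (xh n) uh l q))
       (y n))%:C * avec (xh n) uh l p.

End Defs.

(* Main.v *)
Set Warnings "-all".
Require Import Defs.
From HB Require Import structures.
From mathcomp Require Import all_boot all_order all_algebra.
From mathcomp Require Import all_classical all_reals all_analysis.
From mathcomp Require Import complex.
From mathcomp Require Import zify ring lra.
Import Order.TTheory GRing.Theory Num.Theory.
Local Open Scope ring_scope.
Local Open Scope complex_scope.

Section E.
Variable R : realType.
Variable D : nat.
Hypothesis hD : (0 < D)%N.

Definition th (m : nat) : R := 2 * pi * m%:R / D%:R.
Definition ee (m : nat) : R[i] := cos (th m) -i* sin (th m).

Lemma thD a b : th (a + b) = th a + th b.
Proof. by rewrite /th natrD !mulrDr mulrDl. Qed.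

Lemma eeD a b : ee (a + b) = ee a * ee b.
Proof.
rewrite /ee thD cosD sinD /=; apply/eqP; rewrite eq_complex /=; apply/andP; split; apply/eqP; ring.
Qed.

Lemma ee0 : ee 0 = 1.
Proof. by rewrite /ee /th mulr0 mul0r cos0 sin0 oppr0. Qed.

Lemma Dne0 : (D%:R : R) != 0.
Proof. by rewrite pnatr_eq0 -lt0n. Qed.

Lemma eeDD : ee D = 1.
Proof.
rewrite /ee /th mulfK ?Dne0 //.
have -> : (2 * pi : R) = pi *+ 2 by rewrite mulr2n; lra.
by rewrite cos2pi sin2pi oppr0.
Qed.

Lemma eeM m k : ee (m * k) = ee m ^+ k.
Proof.
elim: k => [|k IH]; first by rewrite muln0 ee0 expr0.
by rewrite mulnS eeD IH exprS.
Qed.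

Lemma eeDk k : ee (D * k) = 1.
Proof. by rewrite eeM eeDD expr1n. Qed.

Lemma ee_mod m : ee m = ee (m %% D).
Proof. by rewrite {1}(divn_eq m D) eeD mulnC eeDk mul1r. Qed.

Lemma eeJ m : ee m * Num.conj (ee m) = 1.
Proof.
rewrite /ee /=; apply/eqP; rewrite eq_complex /=; apply/andP; split; apply/eqP.
  by rewrite -(cos2Dsin2 (th m)) !expr2; ring.
ring.
Qed.

Lemma ee_ne1 r : (0 < r < D)%N -> ee r != 1.
Proof.
move=> /andP[r0 rD]; apply/negP => /eqP [] hc hs.
have hs' : sin (th r) = 0 by rewrite -[LHS]opprK hs oppr0.
have t0 : 0 < th r.
  by rewrite /th divr_gt0 ?ltr0n // mulr_gt0 ?ltr0n // ?mulr_gt0 ?pi_gt0.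
have t2 : th r < pi *+ 2.
  rewrite /th ltr_pdivrMr ?ltr0n // mulr2n.
  have : (r%:R:R) < D%:R by rewrite ltr_nat.
  have := pi_gt0 R. nra.
have [tlt|tge] := ltrP (th r) pi.
  by have := sin_gt0_pi (x:=th r); rewrite t0 tlt hs' ltxx => /(_ isT).
move: tge; rewrite le_eqVlt => /orP[/eqP tp|tgt].
  by move: hc; rewrite -tp cospi; lra.
have : 0 < sin (th r - pi) by apply: sin_gt0_pi; rewrite subr_gt0 tgt /=; rewrite ltrBlDr -mulr2n.
by rewrite sinB sinpi cospi hs' mul0r mulr0 subr0 ltxx.
Qed.

Lemma ee_sum m : \sum_(k < D) ee (m * k) = if (D %| m)%N then D%:R else 0.
Proof.
case: ifP => hm.
  rewrite (eq_bigr (fun _ => 1)); last first.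
    by move=> k _; rewrite -(divnK hm) mulnC mulnA mulnC eeDk.
  by rewrite sumr_const card_ord.
have hr : (0 < m %% D < D)%N.
  by rewrite ltn_pmod // andbT lt0n; move: hm; rewrite /dvdn => ->.
have z1 := @ee_ne1 _ hr; rewrite -ee_mod in z1.
have : (ee m - 1) * \sum_(k < D) ee m ^+ k = 0.
  by rewrite -subrX1 -eeM mulnC eeDk subrr.
move/eqP; rewrite mulf_eq0 subr_eq0 (negbTE z1) /= => /eqP h.
by rewrite -{}[RHS]h; apply: eq_bigr => k _; rewrite eeM.
Qed.

Lemma conj_inv (z w : R[i]) : z * Num.conj z = 1 -> z * w = 1 -> Num.conj z = w.
Proof.
move=> h1 h2; rewrite -[Num.conj z]mulr1 -h2 mulrA (mulrC _ z) h1 mul1r //.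
Qed.

Definition sC : R[i] := (Num.sqrt (D%:R : R))%:C.

Lemma conjR (x : R) : Num.conj (x%:C) = x%:C.
Proof. by change (x%:C^*%C = x%:C); rewrite conjc_real. Qed.

Lemma invsC : sC^-1 = ((Num.sqrt (D%:R : R))^-1)%:C.
Proof. by rewrite /sC fmorphV. Qed.

Lemma conj_divsC (a : R[i]) : Num.conj (a / sC) = Num.conj a / sC.
Proof. by rewrite invsC rmorphM /= conjR. Qed.

Lemma sC_conj : Num.conj sC = sC.
Proof. by rewrite /sC; change ((Num.sqrt (D%:R : R))%:C^*%C = (Num.sqrt (D%:R : R))%:C); rewrite conjc_real. Qed.

Lemma sC2 : sC * sC = D%:R.
Proof.
by rewrite /sC -rmorphM /= -expr2 sqr_sqrtr ?ler0n // rmorph_nat.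
Qed.

Lemma sC_ne0 : sC != 0.
Proof.
apply/negP => /eqP h; move: sC2; rewrite h mulr0 => /eqP.
by rewrite eq_sym pnatr_eq0; move: hD; rewrite lt0n => /negbTE ->.
Qed.

Lemma FmatE (d p : 'I_D) : @Fmat R D d p = ee (d * p) / sC.
Proof. by []. Qed.

Lemma Fmat_sym (d p : 'I_D) : @Fmat R D d p = Fmat p d.
Proof. by rewrite !FmatE mulnC. Qed.

Lemma eeJ' m p : (p <= D)%N -> Num.conj (ee (m * p)) = ee (m * (D - p)).
Proof.
move=> hp; apply: conj_inv; first exact: eeJ.
by rewrite -eeD -mulnDr subnKC // mulnC eeDk.
Qed.

Lemma dvd_lem (q p : 'I_D) : (D %| q + (D - p))%N = (q == p).
Proof.
have := ltn_ord q; have := ltn_ord p.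
case: (q =P p) => [->|hne] hp hq; first by rewrite subnKC ?dvdnn // ltnW.
apply/negP => /dvdnP [c hc].
have hc' : (q + (D - p) = c * D)%N by [].
have hn : q <> p :> nat by move=> /val_inj.
clear hc hne; move: hc'; case: c => [|[|c]] hc'; first lia; first lia.
nia.
Qed.

Lemma orth (q p : 'I_D) : \sum_(k < D) @Fmat R D k q * Num.conj (Fmat k p) = (q == p)%:R.
Proof.
rewrite (eq_bigr (fun k : 'I_D => ee ((q + (D - p)) * k) / D%:R)); last first.
  move=> k _; rewrite !FmatE conj_divsC eeJ' ?(ltnW (ltn_ord p)) //.
  rewrite -sC2 invfM mulnDl -(mulnC k) -(mulnC k) eeD; field; exact: sC_ne0.
rewrite -mulr_suml ee_sum dvd_lem; case: (q == p); last by rewrite mul0r.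
by rewrite mulfV // pnatr_eq0 -lt0n.
Qed.

Lemma ee_modM p n : ee (p * (n %% D)) = ee (p * n).
Proof. by rewrite ee_mod [RHS]ee_mod modnMmr. Qed.

Lemma addI_inj (k : 'I_D) : injective (fun d : 'I_D => addI d k).
Proof.
move=> d d' /(congr1 val) /= /eqP; rewrite eqn_modDr !modn_small // => /eqP h.
exact: val_inj.
Qed.

Lemma dftE (z : 'I_D -> R) p : dft z p = \sum_(d < D) Fmat p d * (z d)%:C.
Proof. by []. Qed.

Lemma conj_dft (z : 'I_D -> R) p :
  Num.conj (dft z p) = \sum_(d < D) Num.conj (Fmat p d) * (z d)%:C.
Proof. by rewrite dftE rmorph_sum; apply: eq_bigr => d _; rewrite rmorphM /= conjR. Qed.

Lemma dft_corr (h u : 'I_D -> R) p :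
  dft (corr h u) p = dft h p * Num.conj (dft u p).
Proof.
rewrite conj_dft dftE mulr_suml.
under [RHS]eq_bigr => m _ do rewrite mulr_sumr.
rewrite [RHS]exchange_big /=.
transitivity (\sum_(k < D) \sum_(d < D)
   Fmat p d * sC^-1 * (u k)%:C * (h (addI d k))%:C).
  rewrite exchange_big /=; apply: eq_bigr => d _.
  rewrite /corr rmorphM rmorph_sum /= -invsC !mulr_sumr.
  by apply: eq_bigr => k _; rewrite rmorphM /=; ring.
apply: eq_bigr => k _.
rewrite [RHS](reindex_inj (addI_inj k)) /=; apply: eq_bigr => d _.
rewrite !FmatE conj_divsC /= ee_modM mulnDr eeD.
have := eeJ (p * k); move: (ee (p * d)) (ee (p * k)) => a b hb.
rewrite -[a in LHS]mulr1 -hb; ring.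
Qed.

Lemma dft_corrs L (x : 'I_D -> R) (U : 'M[R]_(L, D)) n p :
  dft (corrs x U n) p = dft x p * \prod_(j < n) Num.conj (dft (urow U j) p).
Proof.
elim: n => [|n IH]; first by rewrite big_ord0 mulr1.
by rewrite /= dft_corr IH big_ord_recr /= mulrA.
Qed.

Lemma parseval (a b : 'I_D -> R) :
  \sum_(d < D) (a d * b d)%:C = \sum_(p < D) dft a p * Num.conj (dft b p).
Proof.
transitivity (\sum_(d < D) \sum_(e < D) (a d)%:C * (b e)%:C *
   \sum_(p < D) Fmat p d * Num.conj (Fmat p e)).
  apply: eq_bigr => d _.
  rewrite (bigD1 d) //= orth eqxx mulr1 big1 ?addr0 ?rmorphM // => e /negbTE ne.
  by rewrite orth eq_sym ne mulr0.
rewrite [RHS](eq_bigr (fun p : 'I_D => \sum_(d < D) \sum_(e < D)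
   (a d)%:C * (b e)%:C * (Fmat p d * Num.conj (Fmat p e)))); last first.
  move=> p _; rewrite conj_dft dftE mulr_suml; apply: eq_bigr => d _.
  by rewrite mulr_sumr; apply: eq_bigr => e _; ring.
rewrite [RHS]exchange_big /=; apply: eq_bigr => d _.
rewrite [RHS]exchange_big /=; apply: eq_bigr => e _.
by rewrite mulr_sumr.
Qed.

Lemma urowE L (U : 'M[R]_(L, D)) (j : 'I_L) : urow U j = fun k => U j k.
Proof. by rewrite /urow valK. Qed.

Lemma pconv_F L (hL : (0 < L)%N) (x : 'I_D -> R) (U : 'M[R]_(L, D)) :
  (pconv_ip x U)%:C =
  \sum_(p < D) dft x p * \prod_(j < L) Num.conj (dft (fun k => U j k) p).
Proof.
case: L hL U => // L' _ U.
rewrite /pconv_ip rmorph_sum /= parseval; apply: eq_bigr => p _.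
rewrite dft_corrs big_ord_recr /= -mulrA; congr (_ * (_ * _)).
  apply: eq_bigr => j _; congr (Num.conj (dft _ p)).
  exact: (@urowE _ U (widen_ord (leqnSn L') j)).
by congr (Num.conj (dft _ p)); exact: (@urowE _ U ord_max).
Qed.

Lemma dft_pert L (U : 'M[R]_(L, D)) (l j : 'I_L) (k p : 'I_D) (s : R) :
  dft (fun d => (U + s *: delta_mx l k) j d) p
  = dft (fun d => U j d) p + (j == l)%:R * s%:C * Fmat p k.
Proof.
rewrite !dftE.
under eq_bigr => d _ do rewrite !mxE rmorphD mulrDr.
rewrite big_split /=; congr (_ + _).
rewrite (bigD1 k) //= big1 ?addr0; last first.
  by move=> d /negbTE dk; rewrite dk andbF mulr0 rmorph0 mulr0.
by rewrite eqxx andbT; case: (j == l); rewrite /= ?mulr1 ?mulr0 ?rmorph0 ?mul0r ?mulr0 // mul1r mulrC.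
Qed.

Lemma pconv_pert L (hL : (0 < L)%N) (x : 'I_D -> R) (U : 'M[R]_(L, D)) l k s :
  (pconv_ip x (U + s *: delta_mx l k))%:C = (pconv_ip x U)%:C
  + s%:C * \sum_(p < D) avec (dft x) (fun j => dft (fun d => U j d)) l p
                        * Num.conj (Fmat p k).
Proof.
rewrite !pconv_F // mulr_sumr -big_split; apply: eq_bigr => p _ /=.
rewrite (bigD1 l) //= [in RHS](bigD1 l) //= dft_pert eqxx mul1r.
under eq_bigr => j hj do rewrite dft_pert (negbTE hj) !mul0r addr0.
rewrite /avec rmorphD rmorphM /= conjR; ring.
Qed.

Lemma pconv_aff L (hL : (0 < L)%N) (x : 'I_D -> R) (U : 'M[R]_(L, D)) l k s :
  pconv_ip x (U + s *: delta_mx l k) =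
  pconv_ip x U + s * (pconv_ip x (U + delta_mx l k) - pconv_ip x U).
Proof.
apply: complexI; rewrite rmorphD rmorphM rmorphB /=.
rewrite -{2}[delta_mx l k]scale1r !pconv_pert //; ring.
Qed.

Lemma pconv_diff L (hL : (0 < L)%N) (x : 'I_D -> R) (U : 'M[R]_(L, D)) l k :
  (pconv_ip x (U + delta_mx l k) - pconv_ip x U)%:C =
  \sum_(p < D) avec (dft x) (fun j => dft (fun d => U j d)) l p
                        * Num.conj (Fmat p k).
Proof.
by rewrite rmorphB /= -{1}[delta_mx l k]scale1r pconv_pert // mul1r addrC addKr.
Qed.

Lemma pconv_avec L (hL : (0 < L)%N) (x : 'I_D -> R) (U : 'M[R]_(L, D)) l :
  (pconv_ip x U)%:C = \sum_(q < D) Num.conj (dft (fun k => U l k) q)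
     * avec (dft x) (fun j => dft (fun d => U j d)) l q.
Proof.
rewrite pconv_F //; apply: eq_bigr => q _; rewrite (bigD1 l) //= /avec; ring.
Qed.
End E.

Section Der.
Variable R : realType.

Lemma aff_der (a b : R) : is_derive (0:R) (1:R) (fun s : R => a + s * b) b.
Proof.
have h : is_derive (0:R) (1:R) (cst a + b *: (@id R)) ((0:R) + b *: (1:R)).
  apply: is_deriveD.
have e1 : (cst a + b *: (@id R)) = (fun s : R => a + s * b).
  by apply/funext => s /=; rewrite mulrC.
by move: h; rewrite e1 add0r scaler1 => h.
Qed.

Lemma der_sum_aff N (ell : R -> R -> R)
  (hell : forall (z c : R), derivable (fun s => ell s c) z 1)
  (A B c : 'I_N -> R) :
  derive1 (fun s => \sum_(n < N) ell (A n + s * B n) (c n)) 0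
  = \sum_(n < N) dloss ell (A n) (c n) * B n.
Proof.
have ha n : derivable (fun s : R => A n + s * B n) 0 1.
  by have [] := aff_der (A n) (B n).
have hg n : derivable ((fun z => ell z (c n)) \o (fun s : R => A n + s * B n)) 0 1.
  apply/derivable1_diffP; apply: differentiable_comp; apply/derivable1_diffP.
    exact: ha.
  exact: hell.
rewrite derive1E.
have -> : (fun s => \sum_(n < N) ell (A n + s * B n) (c n)) =
   \sum_(n < N) ((fun z => ell z (c n)) \o (fun s : R => A n + s * B n)).
  by rewrite fct_sumE.
rewrite derive_sum //; apply: eq_bigr => n _.
rewrite -derive1E derive1_comp // mul0r addr0 /dloss; congr (_ * _).
by rewrite derive1E; have [_ ->] := aff_der (A n) (B n).
Qed.
End Der.

Theorem lemma6 (R : realType) (L D N : nat) (hL : (0 < L)%N) (hD : (0 < D)%N)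
  (x : 'I_N -> 'I_D -> R) (y : 'I_N -> R)
  (hy : forall n, y n = 1 \/ y n = -1)
  (ell : R -> R -> R)
  (hell : forall (z c : R), derivable (fun s => ell s c) z 1)
  (eta : nat -> R) (u : nat -> 'M[R]_(L, D))
  (hGD : forall t, u t.+1 = u t - eta t *: gradR (loss_conv ell x y) (u t)) :
  forall (t : nat) (l : 'I_L) (p : 'I_D),
    dft (fun k => u t.+1 l k - u t l k) p
      = dft (fun k => u t.+1 l k) p - dft (fun k => u t l k) p
    /\ dft (fun k => u t.+1 l k - u t l k) p
      = - (eta t)%:C
          * grad_diag ell (fun n => dft (x n)) y
              (fun l' => dft (fun k => u t l' k)) l p.
Proof.
move=> t l p.
split.
  rewrite !dftE -sumrB; apply: eq_bigr => k _; by rewrite rmorphB mulrBr.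
set U := u t.
have hdiff k : u t.+1 l k - U l k = - eta t * gradR (loss_conv ell x y) U l k.
  by rewrite hGD !mxE /U; ring.
have hgrad k : gradR (loss_conv ell x y) U l k = \sum_(n < N)
    dloss ell (pconv_ip (x n) U) (y n) *
    (pconv_ip (x n) (U + delta_mx l k) - pconv_ip (x n) U).
  rewrite mxE /loss_conv.
  have -> : (fun s => \sum_(n < N) ell (pconv_ip (x n) (U + s *: delta_mx l k)) (y n))
     = (fun s => \sum_(n < N) ell (pconv_ip (x n) U + s *
          (pconv_ip (x n) (U + delta_mx l k) - pconv_ip (x n) U)) (y n)).
    by apply/funext => s; apply: eq_bigr => n _; rewrite pconv_aff.
  exact: der_sum_aff.
have hre n : complex.Re (\sum_(q < D) Num.conj (dft (fun k => U l k) q)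
    * avec (dft (x n)) (fun l' => dft (fun k => U l' k)) l q) = pconv_ip (x n) U.
  by rewrite -pconv_avec.
rewrite /grad_diag /=.
under [in RHS]eq_bigr => n _ do rewrite hre.
rewrite dftE.
rewrite (eq_bigr (fun k => - (eta t)%:C * \sum_(n < N)
   (dloss ell (pconv_ip (x n) U) (y n))%:C * \sum_(q < D)
   avec (dft (x n)) (fun j => dft (fun d => U j d)) l q *
   (Fmat p k * Num.conj (Fmat q k)))); last first.
  move=> k _; rewrite hdiff hgrad rmorphM rmorphN rmorph_sum /= mulrCA.
  congr (_ * _); rewrite mulr_sumr; apply: eq_bigr => n _.
  rewrite rmorphM /= pconv_diff // !mulr_sumr; apply: eq_bigr => q _; ring.
rewrite -mulr_sumr; congr (_ * _).
rewrite exchange_big /=; apply: eq_bigr => n _.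
rewrite -mulr_sumr; congr (_ * _).
rewrite exchange_big /=.
have ho q : \sum_(k < D) Fmat p k * Num.conj (Fmat q k) = (p == q)%:R :> R[i].
  rewrite -(@orth R D hD p q); apply: eq_bigr => k _.
  by rewrite (@Fmat_sym R D p k) (@Fmat_sym R D q k).
under eq_bigr => q _ do rewrite -mulr_sumr ho.
rewrite (bigD1 p) //= big1 ?addr0 ?eqxx ?mulr1 //.
by move=> q hq; rewrite eq_sym (negbTE hq) mulr0.
Qed.
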